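(* Let $q=2^r$ ($r$ a positive integer), $N=q(q^2-1)$, and let $\{C_i\}_{i=0}^N$ be the weight distribution of the code $C(SL(2,q))$. Then for $0\le i\le N$, \[ C_i=\sum\binom{q^2}{\nu_0}\prod_{tr(\beta^{-1})=0}\binom{q^2+q}{\nu_\beta}\prod_{tr(\beta^{-1})=1}\binom{q^2-q}{\nu_\beta}, \] where the sum runs over all families of nonnegative integers $\{\nu_\beta\}_{\beta\in\mathbb{F}_q}$ with $\sum_\beta\nu_\beta=i$ and $\sum_\beta\nu_\beta\beta=0$ in $\mathbb{F}_q$, and the first and second products run over $\beta\in\mathbb{F}_q^*$ with $tr(\beta^{-1})=0$, respectively $tr(\beta^{-1})=1$.
   Context: $tr:\mathbb{F}_q\to\mathbb{F}_2$ is the absolute trace. $Tr$ is the matrix trace; for a fixed ordering $g_1,\dots,g_N$ of $SL(2,q)$ and $v=(Tr(g_1),\dots,Tr(g_N))\in\mathbb{F}_q^N$, $C(SL(2,q))=\{u\in\mathbb{F}_2^N:u\cdot v=0\}$ (dot product in $\mathbb{F}_q$). $C_i$ is the number of codewords of Hamming weight $i$. Convention: $\binom{b}{a}=0$ if $b<a$. *)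

(* Defs.v *)
From HB Require Import structures.
From mathcomp Require Import all_boot all_order all_algebra all_field.
Set Implicit Arguments. Unset Strict Implicit. Unset Printing Implicit Defensive.
Import GRing.Theory.
Local Open Scope ring_scope.

Definition SL2 (F : finFieldType) := {A : 'M[F]_2 | \det A == 1}.

(* Absolute trace F_{2^r} -> F_2, valued in the prime subfield {0,1} of F. *)
Definition abs_trace (F : finFieldType) (r : nat) (x : F) : F :=
  \sum_(k < r) x ^+ (2 ^ k).

(* The code C(SL(2,q)): binary words u indexed by SL(2,F) (F_2 = bool) with
   sum_g u_g * Tr(g) = 0 in F. *)
Definition CSL (F : finFieldType) : {set {ffun SL2 F -> bool}} :=
  [set u : {ffun SL2 F -> bool} | \sum_(g : SL2 F) ((u g : nat)%:R * \tr (val g)) == 0].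

Definition hweight (F : finFieldType) (u : {ffun SL2 F -> bool}) : nat :=
  #|[set g | u g]|.

Definition weight_count (F : finFieldType) (i : nat) : nat :=
  #|[set u in CSL F | hweight u == i]|.

(* Main.v *)
From HB Require Import structures.
From mathcomp Require Import all_boot all_order all_algebra all_field.
From mathcomp Require Import ring zify.
Require Import Defs.
Set Implicit Arguments. Unset Strict Implicit. Unset Printing Implicit Defensive.
Import GRing.Theory.
Open Scope ring_scope.
Section CombS.
Local Open Scope nat_scope.
Variables (T B : finType) (f : T -> B).
Definition cnt (u : {ffun T -> bool}) b := #|[set g | u g & f g == b]|.

Lemma count_fiber (k : B -> nat) :
  #|[set u : {ffun T -> bool} | [forall b, cnt u b == k b]]| =
  \prod_b 'C(#|[set g | f g == b]|, k b).
Proof.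
pose phi (u : {ffun T->bool}) : {ffun B -> {set T}} := [ffun b => [set g | u g & f g == b]].
have phi_inj: injective phi.
  move=> u v /ffunP H; apply/ffunP => g; move: (H (f g)); rewrite !ffunE => /setP /(_ g).
  by rewrite !inE eqxx !andbT.
rewrite -(card_imset _ phi_inj).
pose FF := fun b => [set A : {set T} | A \subset [set g | f g == b] & #|A| == k b].
have -> : phi @: [set u | [forall b, cnt u b == k b]] = [set F | F \in family FF].
  apply/setP => F; rewrite inE; apply/imsetP/familyP.
    move=> [u]; rewrite inE => /forallP Hu -> b; rewrite ffunE inE; apply/andP; split.
      by apply/subsetP => g; rewrite !inE => /andP[_ ->].
    exact: Hu.
  move=> HF; exists [ffun g => g \in F (f g)]; last first.
    apply/ffunP => b; rewrite ffunE; apply/setP => g; rewrite inE ffunE.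
    have := HF b; rewrite inE => /andP[/subsetP Hs _].
    case: (boolP (f g == b)) => [/eqP <-|Hb]; first by rewrite andbT.
    by rewrite andbF; apply: negbTE; apply/negP => /Hs; rewrite inE (negbTE Hb).
  rewrite inE; apply/forallP => b; rewrite /cnt.
  have := HF b; rewrite inE => /andP[/subsetP Hs /eqP <-].
  apply/eqP/eq_card => g; rewrite !inE ffunE.
  case: (boolP (f g == b)) => [/eqP -> |Hb]; first by rewrite andbT.
  have /negbTE -> : g \notin F b by apply/negP => /Hs; rewrite inE (negbTE Hb).
  by rewrite andbF.
have -> : #|[set F in family FF]| = #|family FF| by apply: eq_card => F; rewrite inE.
rewrite card_family foldrE big_map big_enum /=.
by apply: eq_bigr => b _; rewrite /FF cards_draws cardsE.
Qed.

Lemma count_pred (i : nat) (P : (B -> nat) -> bool)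
  (HP : forall nu, P nu -> (\sum_b nu b)%N = i)
  (HPe : forall n1 n2, n1 =1 n2 -> P n1 = P n2) :
  #|[set u : {ffun T -> bool} | P (cnt u)]| =
  (\sum_(nu : {ffun B -> 'I_i.+1} | P (fun b => nu b : nat))
     \prod_b 'C(#|[set g | f g == b]|, nu b))%N.
Proof.
have cle u b : P (cnt u) -> cnt u b <= i.
  move=> /HP <-; rewrite (bigD1 b) //=; exact: leq_addr.
pose nuof u : {ffun B -> 'I_i.+1} := [ffun b => inord (cnt u b)].
rewrite -sum1_card (partition_big nuof (fun nu : {ffun B -> 'I_i.+1} => P (fun b => nu b : nat))).
  apply: eq_bigr => nu Pnu; rewrite -count_fiber -sum1_card.
  apply: eq_bigl => u; rewrite !inE.
  apply/andP/forallP.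
    move=> [Pu /eqP <-] b; rewrite ffunE inordK //; rewrite ltnS; exact: cle.
  move=> H; have Hc : cnt u =1 (fun b => nu b : nat) by move=> b; apply/eqP/H.
  rewrite (HPe _ _ Hc) Pnu; split => //; apply/eqP/ffunP => b.
  by rewrite ffunE; apply/val_inj; rewrite /= Hc inordK.
move=> u; rewrite inE => Pu; rewrite (HPe _ (cnt u)) // => b.
by rewrite ffunE inordK // ltnS; apply: cle.
Qed.
End CombS.
Section Tr.
Variables (F : finFieldType) (r : nat).
Hypothesis hr : (0 < r)%N.
Hypothesis hF : #|F| = (2 ^ r)%N.

Lemma pch2 : (2 \in [pchar F])%N.
Proof. exact: (card_finPcharP hF). Qed.

Lemma pow2_add (x y : F) k : (x + y) ^+ (2 ^ k) = x ^+ (2 ^ k) + y ^+ (2 ^ k).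
Proof.
apply: exprDn_pchar; rewrite pnatX (pnatE _ (isT : prime 2)) pch2 //.
Qed.

Lemma tr_add (x y : F) : abs_trace r (x + y) = abs_trace r x + abs_trace r y.
Proof. by rewrite /abs_trace -big_split; apply: eq_bigr => k _; rewrite pow2_add. Qed.

Lemma tr_sq (x : F) : abs_trace r (x ^+ 2) = abs_trace r x.
Proof.
rewrite /abs_trace; case: r hr hF => // r' _ hF'.
rewrite [LHS]big_ord_recr [RHS]big_ord_recl /= addrC; congr (_ + _).
  by rewrite -exprM -expnS -hF' expf_card expn0 expr1.
by apply: eq_bigr => k _; rewrite -exprM -expnS /bump /= add1n.
Qed.

Lemma tr_sqr (x : F) : abs_trace r x ^+ 2 = abs_trace r x.
Proof.
rewrite -[LHS](pFrobenius_autE pch2) rmorph_sum -[RHS]tr_sq /abs_trace.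
by apply: eq_bigr => k _; rewrite /= pFrobenius_autE -!exprM mulnC.
Qed.

Lemma tr01 (x : F) : abs_trace r x = 0 \/ abs_trace r x = 1.
Proof.
have : abs_trace r x * (abs_trace r x - 1) == 0.
  by rewrite mulrBr mulr1 -expr2 tr_sqr subrr.
by rewrite mulf_eq0 subr_eq0 => /orP[/eqP|/eqP]; [left|right].
Qed.

Lemma tr_gy (y : F) : abs_trace r (y ^+ 2 + y) = 0.
Proof. by rewrite tr_add tr_sq addrr_pchar2 // pch2. Qed.

Lemma ker_small : (#|[set c : F | abs_trace r c == 0%R]| <= 2 ^ r.-1)%N.
Proof.
pose p : {poly F} := \sum_(k < r) 'X^(2^k).
have pE c : p.[c] = abs_trace r c.
  by rewrite horner_sum; apply: eq_bigr => k _; rewrite hornerXn.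
have sp : size p = (2 ^ r.-1).+1.
  rewrite /p; case: r hr => // r' _ /=.
  rewrite big_ord_recr /= addrC size_polyDl size_polyXn // ltnS.
  apply: leq_trans (size_sum _ _ _) _; apply/bigmax_leqP => k _.
  by rewrite size_polyXn ltn_exp2l.
have p0 : p != 0 by rewrite -size_poly_eq0 sp.
have := max_poly_roots p0 (rs := enum [set c | abs_trace r c == 0]) _ (enum_uniq _).
rewrite -cardE sp ltnS; apply.
by apply/allP => c; rewrite mem_enum inE => /eqP Hc; rewrite /root pE Hc.
Qed.

Definition gq (y : F) := y ^+ 2 + y.

Lemma neq_p1 (y : F) : y != y + 1.
Proof.
apply/eqP => H; have : (1 : F) = 0 by apply: (@addrI _ y); rewrite addr0 -H.
by apply/eqP; rewrite oner_eq0.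
Qed.

Lemma g_eq y y0 : (gq y == gq y0) = (y == y0) || (y == y0 + 1).
Proof.
have H : (y + y0) * (y + y0 + 1) = gq y + gq y0 + (y * y0) *+ 2 by rewrite /gq; ring.
have E : gq y + gq y0 = gq y - gq y0 by rewrite (oppr_pchar2 pch2).
rewrite (mulrn_pchar pch2) addr0 E in H.
rewrite -subr_eq0 -H mulf_eq0 addr_eq0 (oppr_pchar2 pch2) -addrA addr_eq0.
by rewrite (oppr_pchar2 pch2).
Qed.

Lemma card_fib y0 : #|[set y | gq y == gq y0]| = 2%N.
Proof.
have -> : [set y | gq y == gq y0] = [set y0; y0 + 1].
  by apply/setP => y; rewrite !inE g_eq.
by rewrite cards2 neq_p1.
Qed.

Lemma gq_surj c : abs_trace r c == 0 -> exists y, gq y = c.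
Proof.
pose Im := [set gq y | y : F].
have sub : Im \subset [set c | abs_trace r c == 0].
  by apply/subsetP => x /imsetP [y _ ->]; rewrite inE /gq tr_gy.
have cI : (#|Im| * 2 = #|F|)%N.
  rewrite -[RHS]sum1_card (partition_big gq (mem Im)); last by move=> y _; apply: imset_f.
  rewrite -sum_nat_const; apply: eq_bigr => x /imsetP [y0 _ ->].
  by rewrite sum1dep_card -(card_fib y0).
have : Im == [set c | abs_trace r c == 0].
  rewrite eqEcard sub /=; apply: leq_trans ker_small _.
  move: cI; rewrite hF; case: r hr => // r' _ /=; rewrite expnSr => /eqP.
  by rewrite eqn_pmul2r // => /eqP ->.
move=> /eqP E Hc; have : c \in Im by rewrite E inE.
by case/imsetP => y _ ->; exists y.
Qed.

Lemma sum_ind (x : F) : (\sum_(y : F) (y == x : nat))%N = 1%N.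
Proof. by rewrite (bigD1 x) //= eqxx big1 // => y /negbTE ->. Qed.

Lemma sum_g (c : F) : (\sum_(y : F) (gq y == c : nat))%N = if abs_trace r c == 0 then 2%N else 0%N.
Proof.
case: ifP => Hc.
  have [y0 <-] := gq_surj Hc.
  rewrite (eq_bigr (fun y => (y == y0 : nat) + (y == (y0 + 1)%R : nat))%N).
    by rewrite big_split /= !sum_ind.
  move=> y _; rewrite g_eq; case: (boolP (y == y0)) => [/eqP ->|] //=.
  by rewrite (negbTE (neq_p1 y0)).
apply: big1 => y _; case: eqP => // H; move: Hc; rewrite -H /gq tr_gy eqxx.
by [].
Qed.
End Tr.
Section SL.
Variables (F : finFieldType) (t : F).

Definition mk (x : (F*F)*F) : 'M[F]_2 := \matrix_(i < 2, j < 2)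
  if (i == 0%N :> nat) then (if (j == 0%N :> nat) then x.1.1 else x.1.2)
  else (if (j == 0%N :> nat) then x.2 else t - x.1.1).

Lemma det_mk x : \det (mk x) = x.1.1 * (t - x.1.1) - x.1.2 * x.2.
Proof.
rewrite (expand_det_row _ ord0) !big_ord_recl big_ord0 /cofactor !det_mx11 !mxE /=.
rewrite /bump /=; ring.
Qed.

Lemma tr_mk x : \tr (mk x) = t.
Proof. rewrite /mxtrace !big_ord_recl big_ord0 !mxE /=; ring. Qed.

Lemma mk_eq (A : 'M[F]_2) : \tr A = t -> A = mk (A ord0 ord0, A ord0 ord_max, A ord_max ord0).
Proof.
rewrite /mxtrace !big_ord_recl big_ord0 addr0 => Ht.
apply/matrixP => i j; rewrite mxE.
case: i => [[|[|//]] Hi]; case: j => [[|[|//]] Hj] /=; try by congr (A _ _); apply: val_inj.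
by rewrite -Ht addrC addrK; congr (A _ _); apply: val_inj.
Qed.

Definition phi (g : SL2 F) : (F*F)*F := (val g ord0 ord0, val g ord0 ord_max, val g ord_max ord0).

Lemma card_SLt : #|[set g : SL2 F | \tr (val g) == t]| =
  #|[set x : (F*F)*F | x.1.1 * (t - x.1.1) - x.1.2 * x.2 == 1]|.
Proof.
rewrite -(card_in_imset (f := phi) (D := [set g : SL2 F | \tr (val g) == t])).
  apply: eq_card => x; rewrite inE; apply/imsetP/idP.
    move=> [g]; rewrite inE => /eqP Ht ->.
    by rewrite -det_mk -(mk_eq Ht); apply: (valP g).
  move=> Hx; have Hd : \det (mk x) == 1 by rewrite det_mk.
  exists (exist _ (mk x) Hd); first by rewrite inE /= tr_mk.
  by case: x Hx Hd => [[a b] c] Hx Hd; rewrite /phi /= !mxE.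
move=> g1 g2; rewrite !inE => /eqP H1 /eqP H2 Hp; apply: val_inj.
by rewrite (mk_eq H1) (mk_eq H2) -/(phi g1) -/(phi g2) Hp.
Qed.

Lemma sum_ind1 (x : F) : (\sum_(y : F) (y == x : nat))%N = 1%N.
Proof. by rewrite (bigD1 x) //= eqxx big1 // => y /negbTE ->. Qed.

Lemma count_bc (e : F) :
  (\sum_(b : F) \sum_(c : F) ((e - b * c)%R == 1%R : nat))%N = (#|F|.-1 + #|F| * (e == 1%R : nat))%N.
Proof.
rewrite (bigD1 0) //= addnC; congr (_ + _)%N.
  rewrite (eq_bigr (fun _ => 1%N)).
    by rewrite sum1dep_card -(cardC1 (0 : F)); apply: eq_card => b; rewrite inE.
  move=> b bnz; rewrite -(sum_ind1 (b^-1 * (e - 1))); apply: eq_bigr => c _.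
  congr nat_of_bool; apply/eqP/eqP => [H|->].
    have Hb : b * c = e - 1 by rewrite -H; ring.
    by rewrite -Hb mulKf.
  by rewrite mulVKf //; ring.
by rewrite (eq_bigr (fun _ => (e == 1 : nat))) ?sum_nat_const ?card_ord // => c _; rewrite mul0r subr0.
Qed.

Lemma count_abc : #|[set x : (F*F)*F | x.1.1 * (t - x.1.1) - x.1.2 * x.2 == 1]| =
  (#|F| * #|F|.-1 + #|F| * \sum_(a : F) ((a * (t - a))%R == 1%R : nat))%N.
Proof.
rewrite -sum1dep_card big_mkcond /=.
rewrite -(pair_bigA _ (fun (ab : F * F) (c : F) => if ab.1 * (t - ab.1) - ab.2 * c == 1 then 1%N else 0%N)) /=.
rewrite -(pair_bigA _ (fun (a b : F) => \sum_(c : F) if a * (t - a) - b * c == 1 then 1%N else 0%N)) /=.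
rewrite big_distrr /= -sum_nat_const -big_split /=; apply: eq_bigr => a _.
by rewrite -count_bc.
Qed.
End SL.

Section Z.
Variables (F : finFieldType) (r : nat).
Hypothesis hr : (0 < r)%N.
Hypothesis hF : #|F| = (2 ^ r)%N.

Lemma z0 : (\sum_(a : F) ((a * (0 - a))%R == 1%R : nat))%N = 1%N.
Proof.
rewrite -(sum_ind1 (1 : F)); apply: eq_bigr => a _; congr nat_of_bool.
rewrite sub0r mulrN (oppr_pchar2 (pch2 hF)) -expr2 sqrf_eq1 (oppr_pchar2 (pch2 hF)).
by rewrite orbb.
Qed.

Lemma zt (t : F) : t != 0 -> (\sum_(a : F) ((a * (t - a))%R == 1%R : nat))%N =
  if abs_trace r t^-1 == 0 then 2%N else 0%N.
Proof.
move=> tnz; rewrite (reindex_inj (mulfI tnz)) /=.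
rewrite -tr_sq // -(sum_g hr hF); apply: eq_bigr => y _; congr nat_of_bool.
have -> : t * y * (t - t * y) = t ^+ 2 * gq y.
  rewrite /gq -[in RHS](oppr_pchar2 (pch2 hF) (y ^+ 2)); ring.
have t2 : t ^+ 2 != 0 by rewrite expf_neq0.
rewrite exprVn -[X in _ == X](mulfV t2) (inj_eq (mulfI t2)).
by [].
Qed.

Lemma N_t (t : F) : #|[set g : SL2 F | \tr (val g) == t]| =
  if t == 0 then (#|F| ^ 2)%N else if abs_trace r t^-1 == 0 then (#|F| ^ 2 + #|F|)%N
  else (#|F| ^ 2 - #|F|)%N.
Proof.
have q0 : (0 < #|F|)%N by rewrite hF expn_gt0.
rewrite card_SLt count_abc; case: ifP => [/eqP ->|/negbT tnz].
  by rewrite z0 -subn1; nia.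
rewrite zt //; case: ifP => _; rewrite -subn1; nia.
Qed.
End Z.

Unset Implicit Arguments.

Theorem corollary18 (F : finFieldType) (r : nat) (hr : (0 < r)%N)
  (hF : #|F| = (2 ^ r)%N) (i : nat)
  (hi : (i <= #|F| * (#|F| ^ 2 - 1))%N) :
  weight_count F i =
  (\sum_(nu : {ffun F -> 'I_i.+1} |
          ((\sum_(b : F) (nu b : nat))%N == i) &&
          (\sum_(b : F) b *+ nu b == 0 :> F)%R)
     'C(#|F| ^ 2, nu 0%R) *
     (\prod_(b : F | (b != 0 :> F)%R && (abs_trace r b^-1 == 0 :> F)%R) 'C(#|F| ^ 2 + #|F|, nu b)) *
     (\prod_(b : F | (b != 0 :> F)%R && (abs_trace r b^-1 == 1 :> F)%R) 'C(#|F| ^ 2 - #|F|, nu b)))%N.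
Proof.
pose f := fun g : SL2 F => \tr (val g).
pose P := fun nu : F -> nat => ((\sum_(b : F) nu b)%N == i) && (\sum_(b : F) b *+ nu b == 0).
have HP : forall nu, P nu -> (\sum_b nu b)%N = i by move=> nu /andP[/eqP].
have HPe : forall n1 n2, n1 =1 n2 -> P n1 = P n2.
  move=> n1 n2 H; rewrite /P (eq_bigr _ (fun b _ => H b)).
  by rewrite [X in _ && (X == _)](eq_bigr _ (fun b _ => congr1 _ (H b))).
have -> : weight_count F i = #|[set u | P (cnt f u)]|.
  rewrite /weight_count; apply: eq_card => u; rewrite !inE /P /hweight andbC.
  congr (_ && _).
    rewrite -sum1dep_card (partition_big f xpredT) //.
    by congr (_ == _); apply: eq_bigr => b _; rewrite sum1dep_card.
  congr (_ == _).
  rewrite (eq_bigr (fun g => if u g then f g else 0)); last first.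
    by move=> g _; case: (u g); rewrite ?mul1r ?mul0r.
  rewrite -big_mkcond (partition_big f xpredT) //=; apply: eq_bigr => b _.
  rewrite (eq_bigr (fun _ => b)); last by move=> g /andP[_ /eqP].
  by rewrite /cnt -sumr_const; apply: eq_bigl => g; rewrite inE.
rewrite (count_pred f HP HPe); apply: eq_big => // nu _.
rewrite (bigD1 0) //= /f (N_t hr hF) eqxx -mulnA; congr (_ * _)%N.
rewrite (bigID (fun b => abs_trace r b^-1 == 0)) /=; congr (_ * _)%N; apply: eq_big.
- by [].
- by move=> b /andP[/negbTE bnz Htr]; rewrite (N_t hr hF) bnz Htr.
- move=> b; congr (_ && _); case: (tr01 hr hF b^-1) => ->.
    by rewrite eqxx eq_sym oner_eq0.
  by rewrite oner_eq0 eqxx.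
- by move=> b /andP[/negbTE bnz /negbTE Htr]; rewrite (N_t hr hF) bnz Htr.
Qed.
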